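(* For any tensor $\mathcal{A}\in\mathbb{R}^{N_1\times N_2\times N_3}$ with $\mathcal{A}\neq\mathbf{0}$, $\xi(\mathcal{A})\,\mu(\mathcal{A})\ge 1$.
   Context: For $\mathcal{A}\in\mathbb{R}^{N_1\times N_2\times N_3}$ write $A^{(k)}=\mathcal{A}(:,:,k)$ for its frontal slices. $\mathrm{bcirc}(\mathcal{A})\in\mathbb{R}^{N_1N_3\times N_2N_3}$ is the block circulant matrix whose $(i,j)$ block is $A^{(((i-j)\bmod N_3)+1)}$; $\mathrm{unfold}$ stacks the frontal slices vertically, $\mathrm{fold}$ is its inverse, and the t-product is $\mathcal{A}*\mathcal{B}=\mathrm{fold}(\mathrm{bcirc}(\mathcal{A})\,\mathrm{unfold}(\mathcal{B}))$. The transpose $\mathcal{A}^\top$ transposes each frontal slice and reverses the order of slices $2,\dots,N_3$. The identity tensor has first frontal slice the identity and other slices zero; f-diagonal means every frontal slice is diagonal. Every $\mathcal{A}$ of tubal rank $R$ has a skinny t-SVD $\mathcal{A}=\mathcal{U}*\mathcal{S}*\mathcal{V}^\top$ with $\mathcal{U}\in\mathbb{R}^{N_1\times R\times N_3}$, $\mathcal{V}\in\mathbb{R}^{N_2\times R\times N_3}$, $\mathcal{U}^\top*\mathcal{U}=\mathcal{V}^\top*\mathcal{V}=\mathcal{I}$, $\mathcal{S}$ f-diagonal. Tensor spectral norm $\|\mathcal{A}\|=\|\mathrm{bcirc}(\mathcal{A})\|$; $\|\mathcal{A}\|_\infty$ is the maximum absolute entry. $T(\mathcal{A})=\{\mathcal{U}*\mathcal{Y}^\top+\mathcal{W}*\mathcal{V}^\top:\mathcal{Y}\in\mathbb{R}^{N_2\times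 R\times N_3},\mathcal{W}\in\mathbb{R}^{N_1\times R\times N_3}\}$; $\Omega(\mathcal{A})=\{\mathcal{N}:\mathrm{support}(\mathcal{N})\subseteq\mathrm{support}(\mathcal{A})\}$. $\xi(\mathcal{A})=\max_{\mathcal{N}\in T(\mathcal{A}),\|\mathcal{N}\|\le1}\|\mathcal{N}\|_\infty$, $\mu(\mathcal{A})=\max_{\mathcal{N}\in\Omega(\mathcal{A}),\|\mathcal{N}\|_\infty\le1}\|\mathcal{N}\|$. *)

(* Defs.v *)
From HB Require Import structures.
From mathcomp Require Import all_boot all_order all_algebra.
From mathcomp Require Import boolp classical_sets reals.
Set Implicit Arguments. Unset Strict Implicit. Unset Printing Implicit Defensive.
Import Order.TTheory GRing.Theory Num.Theory.
Local Open Scope ring_scope.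
Local Open Scope classical_set_scope.

Section Tensors.
Variable R : realType.

(* A tensor in R^{n1 x n2 x n3}, given by its frontal slices A^{(k)}, k : 'I_n3
   (0-based: slice k here is slice k+1 of the paper). *)
Definition tensor (n1 n2 n3 : nat) := {ffun 'I_n3 -> 'M[R]_(n1, n2)}.

Definition mkidx n3 (i : 'I_n3) (m : nat) : 'I_n3 :=
  Ordinal (ltn_pmod m (leq_ltn_trans (leq0n i) (ltn_ord i))).
Definition csub n3 (i j : 'I_n3) : 'I_n3 := mkidx i (i + n3 - j).
Definition cneg n3 (k : 'I_n3) : 'I_n3 := mkidx k (n3 - k).

Definition bcirc n1 n2 n3 (A : tensor n1 n2 n3) :
  'M[R]_(\sum_(i < n3) n1, \sum_(j < n3) n2) :=
  \mxblock_(i < n3, j < n3) A (csub i j).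

Definition unfold n1 n2 n3 (A : tensor n1 n2 n3) : 'M[R]_(\sum_(k < n3) n1, n2) :=
  \mxcol_(k < n3) A k.
Definition fold n1 n2 n3 (M : 'M[R]_(\sum_(k < n3) n1, n2)) : tensor n1 n2 n3 :=
  [ffun k => submxcol M k].

Definition tprod n1 n2 n4 n3 (A : tensor n1 n2 n3) (B : tensor n2 n4 n3) :
  tensor n1 n4 n3 := fold (bcirc A *m unfold B).

(* tensor transpose: transpose each slice and reverse slices 2..n3 *)
Definition ttr n1 n2 n3 (A : tensor n1 n2 n3) : tensor n2 n1 n3 :=
  [ffun k => (A (cneg k))^T].

Definition tid n n3 : tensor n n n3 :=
  [ffun k : 'I_n3 => if val k == 0%N then 1%:M else 0].

Definition fdiag n1 n2 n3 (S : tensor n1 n2 n3) : Prop :=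
  forall k (i : 'I_n1) (j : 'I_n2), (val i != val j) -> S k i j = 0.

Definition is_tubal_rank n1 n2 n3 (A : tensor n1 n2 n3) (r : nat) : Prop :=
  (exists (B : tensor n1 r n3) (C : tensor n2 r n3), A = tprod B (ttr C)) /\
  forall (r' : nat) (B : tensor n1 r' n3) (C : tensor n2 r' n3),
    A = tprod B (ttr C) -> (r <= r')%N.

Definition skinny_tsvd n1 n2 n3 r (A : tensor n1 n2 n3)
  (U : tensor n1 r n3) (S : tensor r r n3) (V : tensor n2 r n3) : Prop :=
  [/\ is_tubal_rank A r,
      A = tprod (tprod U S) (ttr V),
      tprod (ttr U) U = tid r n3,
      tprod (ttr V) V = tid r n3 &
      fdiag S].

Definition vnorm2 n (x : 'cV[R]_n) : R := Num.sqrt (\sum_i x i 0 ^+ 2).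
Definition specnorm m n (M : 'M[R]_(m, n)) : R :=
  sup [set t | exists x : 'cV[R]_n, vnorm2 x <= 1 /\ t = vnorm2 (M *m x)].

Definition tspec n1 n2 n3 (A : tensor n1 n2 n3) : R := specnorm (bcirc A).

Definition tinf n1 n2 n3 (A : tensor n1 n2 n3) : R :=
  \big[Num.max/0]_(k < n3) \big[Num.max/0]_(i < n1) \big[Num.max/0]_(j < n2)
     `|A k i j|.

Definition Tspace n1 n2 n3 r (U : tensor n1 r n3) (V : tensor n2 r n3) :
  set (tensor n1 n2 n3) :=
  [set N : tensor n1 n2 n3 | exists (Y : tensor n2 r n3) (W : tensor n1 r n3),
           N = tprod U (ttr Y) + tprod W (ttr V)].

Definition Omega n1 n2 n3 (A : tensor n1 n2 n3) : set (tensor n1 n2 n3) :=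
  [set N : tensor n1 n2 n3 | forall k i j, A k i j = 0 -> N k i j = 0].

Definition xi n1 n2 n3 r (U : tensor n1 r n3) (V : tensor n2 r n3) : R :=
  sup [set t | exists N, N \in Tspace U V /\ tspec N <= 1 /\ t = tinf N].

Definition mu n1 n2 n3 (A : tensor n1 n2 n3) : R :=
  sup [set t | exists N, N \in Omega A /\ tinf N <= 1 /\ t = tspec N].

End Tensors.

(* Main.v *)
Require Import Defs.
From HB Require Import structures.
From mathcomp Require Import all_boot all_order all_algebra.
From mathcomp Require Import boolp classical_sets reals.
Import Order.TTheory GRing.Theory Num.Theory.
Local Open Scope ring_scope.
Set Implicit Arguments. Unset Strict Implicit.
Local Open Scope classical_set_scope.

Section Aux.
Variable R : realType.

Lemma vnorm2_ge0 n (x : 'cV[R]_n) : 0 <= vnorm2 x.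
Proof. exact: sqrtr_ge0. Qed.

Lemma sumsq_ge0 n (x : 'cV[R]_n) : 0 <= \sum_i x i 0 ^+ 2.
Proof. by apply: sumr_ge0 => i _; exact: sqr_ge0. Qed.

Lemma entry_le_vnorm2 n (x : 'cV[R]_n) j : `|x j 0| <= vnorm2 x.
Proof.
rewrite -sqrtr_sqr /vnorm2 ler_wsqrtr //.
rewrite (bigD1 j) //= lerDl; apply: sumr_ge0 => i _; exact: sqr_ge0.
Qed.

Lemma vnorm2Z n (c : R) (x : 'cV[R]_n) : vnorm2 (c *: x) = `|c| * vnorm2 x.
Proof.
rewrite /vnorm2 -sqrtr_sqr -sqrtrM ?sqr_ge0 //; congr Num.sqrt.
rewrite mulr_sumr; apply: eq_bigr => i _; rewrite mxE; exact: exprMn.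
Qed.

Lemma vnorm2_bound m n (M : 'M[R]_(m, n)) (x : 'cV[R]_n) :
  vnorm2 x <= 1 ->
  vnorm2 (M *m x) <= Num.sqrt (\sum_i (\sum_j `|M i j|) ^+ 2).
Proof.
move=> hx; rewrite /vnorm2 ler_wsqrtr //; apply: ler_sum => i _.
rewrite -real_normK ?num_real // ler_pXn2r ?nnegrE ?sumr_ge0 //.
rewrite mxE; have H := ler_norm_sum (index_enum (ordinal n)) (fun j => M i j * x j 0) xpredT; apply: (le_trans H); apply: ler_sum => j _.
rewrite normrM -[leRHS]mulr1 ler_wpM2l //. exact: le_trans (entry_le_vnorm2 x j) hx.
Qed.

Definition specset m n (M : 'M[R]_(m, n)) :=
  [set t | exists x : 'cV[R]_n, vnorm2 x <= 1 /\ t = vnorm2 (M *m x)].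

Lemma specset_sup m n (M : 'M[R]_(m, n)) : has_sup (specset M).
Proof.
split; first by exists (vnorm2 (M *m 0)); exists 0; split=> //;
  rewrite /vnorm2 big1 ?sqrtr0 // => i _; rewrite mxE expr0n.
exists (Num.sqrt (\sum_i (\sum_j `|M i j|) ^+ 2)) => t [x [hx ->]].
exact: vnorm2_bound.
Qed.

Lemma spec_ub m n (M : 'M[R]_(m, n)) x : vnorm2 x <= 1 -> vnorm2 (M *m x) <= specnorm M.
Proof. move=> hx; apply: (sup_upper_bound (specset_sup M)); by exists x. Qed.

Lemma spec_le m n (M : 'M[R]_(m, n)) b :
  (forall x, vnorm2 x <= 1 -> vnorm2 (M *m x) <= b) -> specnorm M <= b.
Proof.
move=> h; apply: ge_sup; first by case: (specset_sup M).
by move=> t [x [hx ->]]; exact: h.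
Qed.

Lemma spec_ge0 m n (M : 'M[R]_(m, n)) : 0 <= specnorm M.
Proof.
apply: le_trans (spec_ub M (x := 0) _); first exact: vnorm2_ge0.
by rewrite /vnorm2 big1 ?sqrtr0 // => i _; rewrite mxE expr0n.
Qed.

Lemma entry_le_spec m n (M : 'M[R]_(m, n)) i j : `|M i j| <= specnorm M.
Proof.
pose e : 'cV[R]_n := \col_k (k == j)%:R.
have he : vnorm2 e <= 1.
  rewrite /vnorm2 (bigD1 j) //= big1 ?addr0 ?mxE ?eqxx ?expr1n ?sqrtr1 //.
  by move=> k /negbTE hk; rewrite mxE hk expr0n.
apply: le_trans (spec_ub M he); apply: le_trans (entry_le_vnorm2 _ i).
rewrite mxE (bigD1 j) //= big1 ?addr0 ?mxE ?eqxx ?mulr1 //.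
by move=> k /negbTE hk; rewrite mxE hk mulr0.
Qed.

Lemma spec_le_entry m n (M : 'M[R]_(m, n)) b :
  (forall i j, `|M i j| <= b) ->
  specnorm M <= Num.sqrt (\sum_(i < m) (\sum_(j < n) b) ^+ 2).
Proof.
move=> hb; apply: spec_le => x hx; apply: le_trans (vnorm2_bound M hx) _.
rewrite ler_wsqrtr //; apply: ler_sum => i _.
rewrite ler_pXn2r ?nnegrE ?sumr_ge0 //; last first.
  by move=> j _; apply: le_trans (hb i j).
by apply: ler_sum => j _.
Qed.

Lemma specZ m n (M : 'M[R]_(m, n)) c : 0 <= c -> c * specnorm M <= specnorm (c *: M).
Proof.
move=> hc; have [->|c0] := eqVneq c 0; first by rewrite mul0r spec_ge0.
have cpos : 0 < c by rewrite lt_def c0.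
rewrite -ler_pdivlMl // mulrC; apply: spec_le => x hx.
rewrite ler_pdivlMr // mulrC -[X in X * vnorm2 _](ger0_norm hc) -vnorm2Z scalemxAl.
exact: spec_ub.
Qed.

Lemma specZ_le m n (M : 'M[R]_(m, n)) c : 0 <= c -> specnorm (c *: M) <= c * specnorm M.
Proof.
move=> hc; apply: spec_le => x hx.
rewrite -scalemxAl vnorm2Z ger0_norm // ler_wpM2l //; exact: spec_ub.
Qed.

End Aux.
Section T.
Variable R : realType.
Lemma tinf_ge n1 n2 n3 (A : tensor R n1 n2 n3) k i j : `|A k i j| <= tinf A.
Proof.
rewrite /tinf; apply: le_trans (le_bigmax _ _ k).
apply: le_trans (le_bigmax _ _ i); exact: (le_bigmax _ _ j).
Qed.

Lemma tinf_le n1 n2 n3 (A : tensor R n1 n2 n3) b :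
  0 <= b -> (forall k i j, `|A k i j| <= b) -> tinf A <= b.
Proof.
move=> b0 h; rewrite /tinf; apply: bigmax_le => // k _.
apply: bigmax_le => // i _; apply: bigmax_le => // j _; exact: h.
Qed.

Lemma bcircE n1 n2 n3 (A : tensor R n1 n2 n3) s t :
  bcirc A s t = A (csub (tagnat.sig1 s) (tagnat.sig1 t)) (tagnat.sig2 s) (tagnat.sig2 t).
Proof. by rewrite /bcirc mxE. Qed.

Lemma bcirc_le_tinf n1 n2 n3 (A : tensor R n1 n2 n3) s t : `|bcirc A s t| <= tinf A.
Proof. rewrite bcircE; exact: tinf_ge. Qed.

Lemma tinf_le_tspec n1 n2 n3 (A : tensor R n1 n2 n3) k i j : `|A k i j| <= tspec A.
Proof.
pose z : 'I_n3 := Ordinal (leq_ltn_trans (leq0n k) (ltn_ord k)).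
have := entry_le_spec (bcirc A) (tagnat.Rank k i) (tagnat.Rank z j).
rewrite bcircE. 
have -> : csub (tagnat.sig1 (tagnat.Rank k i)) (tagnat.sig1 (tagnat.Rank z j)) = k.
  rewrite !tagnat.Rank1K; apply: val_inj => /=.
  by rewrite subn0 -{2}(modn_small (ltn_ord k)) modnDr.
have e1 : (tagnat.sig2 (tagnat.Rank k i) : 'I_n1) = i.
  by apply: val_inj; rewrite /= tagnat.Rank2K.
have e2 : (tagnat.sig2 (tagnat.Rank z j) : 'I_n2) = j.
  by apply: val_inj; rewrite /= tagnat.Rank2K.
by rewrite e1 e2.
Qed.

Lemma tscaleE n1 n2 n3 (A : tensor R n1 n2 n3) c k i j : (c *: A) k i j = c * A k i j.
Proof. by rewrite ffunE mxE. Qed.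

Lemma bcircZ n1 n2 n3 (A : tensor R n1 n2 n3) c : bcirc (c *: A) = c *: bcirc A.
Proof. by apply/matrixP => s t; rewrite mxE tscaleE [RHS]mxE bcircE. Qed.

Lemma tprodZ n1 n2 n4 n3 (A : tensor R n1 n2 n3) (B : tensor R n2 n4 n3) c :
  tprod (c *: A) B = c *: tprod A B.
Proof.
apply/ffunP => k; apply/matrixP => i j.
rewrite tscaleE /tprod /fold !ffunE !mxE bcircZ mulr_sumr; apply: eq_bigr => t _; by rewrite mxE mulrA.
Qed.

Lemma tprod0 n1 n2 n4 n3 (A : tensor R n1 n2 n3) :
  tprod A (ttr (0 : tensor R n4 n2 n3)) = 0.
Proof.
apply/ffunP => k; apply/matrixP => i j.
rewrite /tprod /fold !ffunE !mxE big1 // => t _.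
by rewrite !mxE /ttr ffunE mxE ffunE mxE mulr0.
Qed.

End T.

Theorem corollary1 (R : realType) (N1 N2 N3 : nat) (A : tensor R N1 N2 N3) :
  A != 0 ->
  forall (r : nat) (U : tensor R N1 r N3) (S : tensor R r r N3)
         (V : tensor R N2 r N3),
    skinny_tsvd A U S V ->
    1 <= xi U V * mu A.
Proof.
move=> A0 r U S V [_ AE _ _ _].
have : [exists k, [exists i, [exists j, A k i j != 0]]].
  apply: contraNT A0 => H; apply/eqP/ffunP => k; apply/matrixP => i j.
  rewrite !ffunE !mxE; apply/eqP; apply: contraNT H => hne.
  by apply/existsP; exists k; apply/existsP; exists i; apply/existsP; exists j.
case/existsP => k /existsP [i /existsP [j Akij]].
set m := tinf A; set s := tspec A.
have m0 : 0 < m by apply: lt_le_trans (tinf_ge A k i j); rewrite normr_gt0.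
have s0 : 0 < s.
  apply: lt_le_trans (tinf_le_tspec A k i j); rewrite normr_gt0 //.
have ms : m <= s by apply: tinf_le => //; [exact: ltW | exact: tinf_le_tspec].
have hxi : m / s <= xi U V.
  have hN : (s^-1 *: A) \in Tspace U V.
    apply: mem_set; exists 0, (s^-1 *: tprod U S).
    by rewrite tprod0 add0r tprodZ -AE.
  have hsp : tspec (s^-1 *: A) <= 1.
    rewrite /tspec bcircZ; apply: le_trans (specZ_le _ _) _; first by rewrite invr_ge0 ltW.
    by rewrite mulVf // gt_eqF.
  have hsup : has_sup [set t | exists N, N \in Tspace U V /\ tspec N <= 1 /\ t = tinf N].
    split; first by exists (tinf (s^-1 *: A)), (s^-1 *: A).
    exists 1 => t [N [_ [hN1 ->]]]; apply: tinf_le => //.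
    by move=> k' i' j'; apply: le_trans (tinf_le_tspec _ _ _ _) hN1.
  apply: le_trans (sup_upper_bound hsup (x := tinf (s^-1 *: A)) _); last first.
    by exists (s^-1 *: A).
  rewrite mulrC -ler_pdivlMl; last by rewrite invr_gt0.
  have t0 : 0 <= tinf (s^-1 *: A).
    exact: le_trans (normr_ge0 _) (tinf_ge _ k i j).
  apply: tinf_le; first by rewrite invrK mulr_ge0 // ltW.
  move=> k' i' j'; rewrite invrK -[X in X <= _](mulVKf (negbT (gt_eqF s0))).
  apply: ler_wpM2l; first exact: ltW.
  apply: le_trans (tinf_ge (s^-1 *: A) k' i' j').
  by rewrite tscaleE normrM (ger0_norm (x := s^-1)) // invr_ge0 ltW.
have hmu : s / m <= mu A.
  have hN : (m^-1 *: A) \in Omega A.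
    by apply: mem_set => k' i' j' h; rewrite tscaleE h mulr0.
  have hinf : tinf (m^-1 *: A) <= 1.
    apply: tinf_le => // k' i' j'.
    rewrite tscaleE normrM (ger0_norm (x:=m^-1)); last by rewrite invr_ge0 ltW.
    by rewrite mulrC ler_pdivrMr // mul1r; exact: tinf_ge.
  have hsup : has_sup [set t | exists N, N \in Omega A /\ tinf N <= 1 /\ t = tspec N].
    split; first by exists (tspec (m^-1 *: A)), (m^-1 *: A).
    exists (Num.sqrt (\sum_(i < \sum_(k < N3) N1) (\sum_(j < \sum_(k < N3) N2) (1 : R)) ^+ 2)).
    move=> t [N [_ [hN1 ->]]]; apply: spec_le_entry => p q.
    exact: le_trans (bcirc_le_tinf _ _ _) hN1.
  apply: le_trans (sup_upper_bound hsup (x := tspec (m^-1 *: A)) _); last first.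
    by exists (m^-1 *: A).
  rewrite /tspec bcircZ mulrC; apply: specZ; by rewrite invr_ge0 ltW.
have -> : 1 = (m / s) * (s / m) by rewrite mulrA divfK ?gt_eqF // divff // gt_eqF.
apply: ler_pM => //; by rewrite divr_ge0 // ltW.
Qed.
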